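(* For every $A\in P(n)$, $$I(2,A)=I(sp,\bar A\circ A)^{1/2}.$$
   Context: $P(n)$ denotes positive semidefinite complex $n\times n$ matrices, $\circ$ the Hadamard (entrywise) product, $\bar A$ the entrywise complex conjugate. $I(2,A)=\min\{\|A\circ B\|_2: B\in P(n),\ \|B\|_2=1\}$ with $\|\cdot\|_2$ the Frobenius norm, and $I(sp,C)=\min\{\|C\circ B\|: B\in P(n),\ \|B\|=1\}$ with $\|\cdot\|$ the spectral norm. *)

(* Defs.v *)
From HB Require Import structures.
From mathcomp Require Import all_boot all_order all_algebra.
From mathcomp Require Import complex.
From mathcomp Require Import boolp classical_sets reals.

Set Implicit Arguments.
Unset Strict Implicit.
Unset Printing Implicit Defensive.

Import Order.TTheory GRing.Theory Num.Theory.
Local Open Scope ring_scope.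
Local Open Scope classical_set_scope.

Section Defs.
Variable R : realType.
Local Notation C := (R[i]).

Definition cabs (z : C) : R := ComplexField.Normc.normc z.

Definition mxconj m n (A : 'M[C]_(m, n)) : 'M[C]_(m, n) :=
  map_mx (fun z => (z^*)%C) A.

Definition hadamard n (A B : 'M[C]_n) : 'M[C]_n :=
  \matrix_(i, j) (A i j * B i j).

Definition adj m n (A : 'M[C]_(m, n)) : 'M[C]_(n, m) := (mxconj A)^T.

(* positive semidefinite: Hermitian and x^* A x >= 0 for all x in C^n
   (the order on C: 0 <= z iff z is real and nonnegative) *)
Definition psd n (A : 'M[C]_n) : Prop :=
  (forall i j, A j i = ((A i j)^*)%C) /\
  (forall x : 'cV[C]_n, 0 <= (adj x *m A *m x) 0 0).

Definition frob m n (A : 'M[C]_(m, n)) : R :=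
  Num.sqrt (\sum_(i < m) \sum_(j < n) cabs (A i j) ^+ 2).

Definition vnorm n (x : 'cV[C]_n) : R := frob x.

Definition specnorm n (B : 'M[C]_n) : R :=
  sup [set vnorm (B *m x) | x in [set x : 'cV[C]_n | vnorm x = 1]].

Definition I2 n (A : 'M[C]_n) : R :=
  inf [set frob (hadamard A B) | B in [set B : 'M[C]_n | psd B /\ frob B = 1]].

Definition Isp n (Cm : 'M[C]_n) : R :=
  inf [set specnorm (hadamard Cm B) | B in [set B : 'M[C]_n | psd B /\ specnorm B = 1]].

End Defs.

(* Main.v *)
Require Import Defs.
From HB Require Import structures.
From mathcomp Require Import all_boot all_order all_algebra.
From mathcomp Require Import complex.
From mathcomp Require Import boolp classical_sets reals.
From mathcomp Require Import topology normedtype derive.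
From mathcomp Require Import ring lra.
Import Order.TTheory GRing.Theory Num.Theory.
Import numFieldNormedType.Exports.
Local Open Scope ring_scope.
Set Implicit Arguments.
Unset Strict Implicit.
Unset Printing Implicit Defensive.

(* Proof outline: with C = conj(A) o A (entries |a_ij|^2) and
   m = min over the simplex of u^T C u, we show I2(A)^2 = m = Isp(C). *)
Section P1.
Variable R : realType.
Local Notation K := (R[i]).
Local Notation cj z := ((z)^*)%C.
Local Open Scope complex_scope.

Lemma cabs2 (z : K) : ((cabs z)^+2)%:C = z * cj z.
Proof.
rewrite /cabs rmorphXn /= -sqr_normc. by [].
Qed.

Lemma cj_real (x : R) : cj (x%:C) = x%:C.
Proof. exact: conjc_real. Qed.

Lemma nn_ge0 (z : K) : 0 <= z * cj z.
Proof. exact: mulcJ_ge0. Qed.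

Lemma real_ge0E (z : K) : 0 <= z -> z = (complex.Re z)%:C.
Proof. move=> h; apply/esym/RRe_real. exact: ger0_real. Qed.

End P1.
Section P2.
Variable R : realType.
Local Notation K := (R[i]).
Local Notation cj z := ((z)^*)%C.
Local Open Scope complex_scope.

Definition Qf n (c : 'I_n -> 'I_n -> K) (a : 'I_n -> K) : K :=
  \sum_i \sum_j c i j * a i * cj (a j).

Lemma sum4_swap n (G : 'I_n -> 'I_n -> 'I_n -> 'I_n -> K) :
  \sum_i \sum_j \sum_k \sum_l G i j k l = \sum_k \sum_l \sum_i \sum_j G i j k l.
Proof.
transitivity (\sum_i \sum_k \sum_l \sum_j G i j k l).
  apply: eq_bigr => i _; rewrite exchange_big; apply: eq_bigr => k _.
  by rewrite exchange_big.
rewrite exchange_big; apply: eq_bigr => k _; by rewrite exchange_big.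
Qed.

Lemma expand_sq n (X : 'M[K]_n) (d : 'I_n -> R) (V : 'M[K]_n) (c : 'I_n -> 'I_n -> K) :
  (forall i j, X i j = \sum_k (d k)%:C * V k i * cj (V k j)) ->
  \sum_i \sum_j c i j * X i j * cj (X i j) =
  \sum_k \sum_l (d k)%:C * (d l)%:C * Qf c (fun i => V k i * cj (V l i)).
Proof.
move=> hX.
transitivity (\sum_i \sum_j \sum_k \sum_l
   (c i j * ((d k)%:C * V k i * cj (V k j)) * cj ((d l)%:C * V l i * cj (V l j)))).
  apply: eq_bigr => i _; apply: eq_bigr => j _.
  rewrite hX rmorph_sum mulr_sumr mulr_suml; apply: eq_bigr => k _.
  by rewrite mulr_sumr.
rewrite sum4_swap; apply: eq_bigr => k _; apply: eq_bigr => l _.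
rewrite /Qf mulr_sumr; apply: eq_bigr => i _; rewrite mulr_sumr; apply: eq_bigr => j _.
rewrite !rmorphM /= conjcK oppr0 complexr0.
by ring.
Qed.

End P2.
Section P3.
Variable R : realType.
Local Notation K := (R[i]).
Local Notation cj z := ((z)^*)%C.
Local Open Scope complex_scope.
Local Open Scope sesquilinear_scope.

Lemma Qf_rank1 n (w a : 'I_n -> K) :
  Qf (fun i j => w i * cj (w j)) a = (\sum_i w i * a i) * cj (\sum_i w i * a i).
Proof.
rewrite /Qf rmorph_sum mulr_suml; apply: eq_bigr => i _.
rewrite mulr_sumr; apply: eq_bigr => j _; rewrite rmorphM; ring.
Qed.

Lemma quadE n (X : 'M[K]_n) (x : 'cV[K]_n) :
  (adj x *m X *m x) 0 0 = \sum_i \sum_j cj (x i 0) * X i j * x j 0.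
Proof.
rewrite mxE exchange_big /=; apply: eq_bigr => j _.
rewrite mxE mulr_suml; apply: eq_bigr => i _.
by rewrite /adj /mxconj !mxE.
Qed.

Lemma psd_decomp n (X : 'M[K]_n) : psd X -> exists (d : 'I_n -> R) (V : 'M[K]_n),
 [/\ forall k, 0 <= d k,
     forall i j, X i j = \sum_k (d k)%:C * V k i * cj (V k j),
     forall k l, \sum_i V k i * cj (V l i) = (k == l)%:R &
     forall i j, \sum_k cj (V k i) * V k j = (i == j)%:R].
Proof.
move=> [Hh Hp].
have Hherm : X \is hermsymmx.
  apply/is_hermitianmxP; rewrite expr0 scale1r.
  by apply/matrixP => i j; rewrite !mxE Hh.
set P := spectralmx X; set sp := spectral_diag X.
have PU : P \is unitarymx by exact: spectral_unitarymx.
have XE : X = invmx P *m diag_mx sp *m P.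
  by apply/orthomx_spectralP; exact: hermitian_normalmx.
rewrite invmx_unitary // in XE.
have spR : sp \is a realmx by exact: hermitian_spectral_diag_real.
have P1 : P *m P^t* = 1%:M by apply/unitarymxP.
have P2 : P^t* *m P = 1%:M.
  by rewrite -(invmx_unitary PU) mulVmx // unitarymx_unit.
pose d k := complex.Re (sp 0 k).
have dE k : (d k)%:C = sp 0 k.
  by apply: RRe_real; move/mxOverP: spR; apply.
pose V := map_mx (fun z => cj z) P.
have XE' i j : X i j = \sum_k (d k)%:C * V k i * cj (V k j).
  rewrite XE mxE; apply: eq_bigr => k _.
  by rewrite mul_mx_diag !mxE dE conjcK; ring.
have O1 k l : \sum_i V k i * cj (V l i) = (k == l)%:R.
  rewrite eq_sym; have := congr1 (fun M : 'M[K]_n => M l k) P1; rewrite !mxE => <-.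
  apply: eq_bigr => i _; rewrite !mxE conjcK; ring.
have O2 i j : \sum_k cj (V k i) * V k j = (i == j)%:R.
  rewrite eq_sym; have := congr1 (fun M : 'M[K]_n => M j i) P2; rewrite !mxE => <-.
  apply: eq_bigr => k _; rewrite !mxE conjcK; ring.
exists d, V; split => // k.
pose x : 'cV[K]_n := \col_i V k i.
have := Hp x; rewrite quadE.
have -> : \sum_i \sum_j cj (x i 0) * X i j * x j 0 = (d k)%:C.
  transitivity (\sum_l (d l)%:C * ((\sum_i V l i * cj (V k i)) * cj (\sum_i V l i * cj (V k i)))).
    transitivity (\sum_i \sum_l \sum_j cj (V k i) * ((d l)%:C * V l i * cj (V l j)) * V k j).
      apply: eq_bigr => i _; rewrite exchange_big; apply: eq_bigr => j _.
      by rewrite !mxE XE' mulr_sumr mulr_suml.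
    rewrite exchange_big; apply: eq_bigr => l _.
    rewrite rmorph_sum mulr_suml mulr_sumr; apply: eq_bigr => i _.
    rewrite mulr_sumr mulr_sumr; apply: eq_bigr => j _.
    rewrite rmorphM /= conjcK; ring.
  rewrite (bigD1 k) //= O1 eqxx big1 ?addr0 ?rmorph1 ?mulr1 // => l /negPf lk.
  by rewrite O1 lk mul0r mulr0.
by rewrite lecR.
Qed.
End P3.
Section P4.
Variable R : realType.
Local Notation K := (R[i]).
Local Notation cj z := ((z)^*)%C.
Local Open Scope complex_scope.

Definition ccf n (A : 'M[K]_n) i j := A i j * cj (A i j).

Lemma sum_diag_le n (T : 'I_n -> 'I_n -> K) :
  (forall k l, 0 <= T k l) -> \sum_k T k k <= \sum_k \sum_l T k l.
Proof.
move=> hT; apply: ler_sum => k _.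
rewrite (bigD1 k) //= lerDl; apply: sumr_ge0 => l _; exact: hT.
Qed.

Lemma sum_one_le n (T : 'I_n -> K) t :
  (forall k, 0 <= T k) -> T t <= \sum_k T k.
Proof.
move=> hT; rewrite (bigD1 t) //= lerDl; apply: sumr_ge0 => l _; exact: hT.
Qed.

Lemma Qf_ge0 n (A : 'M[K]_n) (w : 'I_n -> K) : psd A -> 0 <= Qf (ccf A) w.
Proof.
move=> /psd_decomp [e [Z [he hA _ _]]].
have -> : Qf (ccf A) w =
   \sum_i \sum_j (fun i j => w i * cj (w j)) i j * A i j * cj (A i j).
  apply: eq_bigr => i _; apply: eq_bigr => j _; rewrite /ccf; ring.
rewrite (expand_sq _ hA); apply: sumr_ge0 => k _; apply: sumr_ge0 => l _.
rewrite Qf_rank1; apply: mulr_ge0; first by apply: mulr_ge0; rewrite lecR.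
exact: nn_ge0.
Qed.

Lemma Pars n (W : 'I_n -> 'I_n -> K) (a : 'I_n -> K) :
  (forall k l, \sum_i W k i * cj (W l i) = (k == l)%:R) ->
  \sum_i (\sum_k a k * W k i) * cj (\sum_k a k * W k i) = \sum_k a k * cj (a k).
Proof.
move=> hW.
transitivity (\sum_k \sum_l a k * cj (a l) * \sum_i W k i * cj (W l i)).
  transitivity (\sum_i \sum_k \sum_l a k * cj (a l) * (W k i * cj (W l i))).
    apply: eq_bigr => i _; rewrite rmorph_sum mulr_suml; apply: eq_bigr => k _.
    rewrite mulr_sumr; apply: eq_bigr => l _; rewrite rmorphM; ring.
  rewrite exchange_big; apply: eq_bigr => k _; rewrite exchange_big.
  by apply: eq_bigr => l _; rewrite mulr_sumr.
apply: eq_bigr => k _; rewrite (bigD1 k) //= hW eqxx mulr1 big1 ?addr0 // => l /negPf lk.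
by rewrite hW eq_sym lk mulr0.
Qed.

End P4.
Section P5.
Variable R : realType.
Local Notation K := (R[i]).
Local Notation cj z := ((z)^*)%C.
Local Open Scope complex_scope.

Lemma Qf1 n (a : 'I_n -> K) :
  Qf (fun _ _ => 1) a = (\sum_i a i) * cj (\sum_i a i).
Proof.
rewrite /Qf rmorph_sum mulr_suml; apply: eq_bigr => i _.
rewrite mulr_sumr; apply: eq_bigr => j _; ring.
Qed.

Definition simplexK n (a : 'I_n -> K) := (forall i, 0 <= a i) /\ \sum_i a i = 1.

Lemma F1 n (A B : 'M[K]_n) (m : K) : psd A -> psd B ->
  (forall a, simplexK a -> m <= Qf (ccf A) a) -> 0 <= m ->
  m * (\sum_i \sum_j B i j * cj (B i j)) <= \sum_i \sum_j ccf A i j * B i j * cj (B i j).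
Proof.
move=> pA pB Hm m0; have [d [V [d0 hB O1 O2]]] := psd_decomp pB.
have -> : \sum_i \sum_j B i j * cj (B i j) =
    \sum_i \sum_j (fun _ _ => 1) i j * B i j * cj (B i j).
  by apply: eq_bigr => i _; apply: eq_bigr => j _; rewrite mul1r.
rewrite (expand_sq _ hB) (expand_sq _ hB).
have -> : \sum_k \sum_l (d k)%:C * (d l)%:C * Qf (fun=> fun=> 1) (fun i => V k i * cj (V l i))
   = \sum_k (d k)%:C * (d k)%:C.
  apply: eq_bigr => k _; rewrite (bigD1 k) //= Qf1 O1 eqxx mulr1n rmorph1 !mulr1.
  rewrite big1 ?addr0 // => l /negPf lk; by rewrite Qf1 O1 eq_sym lk mul0r mulr0.
apply: le_trans (sum_diag_le _); last first.
  move=> k l; apply: mulr_ge0; first by apply: mulr_ge0; rewrite lecR.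
  exact: Qf_ge0.
rewrite mulr_sumr; apply: ler_sum => k _.
rewrite mulrC; apply: ler_wpM2l; first by apply: mulr_ge0; rewrite lecR.
apply: Hm; split; first by move=> i; exact: nn_ge0.
by rewrite O1 eqxx mulr1n.
Qed.

End P5.
Section P6.
Variable R : realType.
Local Notation K := (R[i]).
Local Notation cj z := ((z)^*)%C.
Local Open Scope complex_scope.

Lemma F2 n (A B : 'M[K]_n) (m : K) : psd A -> psd B ->
  (forall a, simplexK a -> m <= Qf (ccf A) a) -> 0 <= m -> (0 < n)%N ->
  exists x : 'cV[K]_n, exists t : R, [/\ \sum_i x i 0 * cj (x i 0) = 1, 0 <= t,
   (forall y : 'cV[K]_n, \sum_i (B *m y) i 0 * cj ((B *m y) i 0)
        <= (t ^+ 2)%:C * \sum_i y i 0 * cj (y i 0)) &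
   t%:C * m <= (adj x *m hadamard (hadamard (mxconj A) A) B *m x) 0 0].
Proof.
move=> pA pB Hm m0 n0; have [d [V [d0 hB O1 O2]]] := psd_decomp pB.
pose k0 : 'I_n := Ordinal n0.
have [t _ ht] := @arg_maxP _ _ _ k0 xpredT d isT.
exists (\col_i V t i), (d t); split => //.
- have := O1 t t; rewrite eqxx mulr1n => <-.
  by apply: eq_bigr => i _; rewrite !mxE.
- move=> y; pose s k := \sum_j y j 0 * cj (V k j).
  have By i : (B *m y) i 0 = \sum_k ((d k)%:C * s k) * V k i.
    rewrite mxE; under eq_bigr do rewrite hB mulr_suml.
    rewrite exchange_big /=; apply: eq_bigr => k _.
    rewrite /s mulr_sumr mulr_suml; apply: eq_bigr => j _; ring.
  under eq_bigr do rewrite By.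
  rewrite (Pars _ O1).
  have -> : \sum_i y i 0 * cj (y i 0) = \sum_k s k * cj (s k).
    rewrite /s (@Pars _ _ (fun j k => cj (V k j)) (fun j => y j 0)) //.
    move=> j l; rewrite -[RHS]O2; apply: eq_bigr => k _; rewrite conjcK.
    by rewrite mulrC.
  rewrite mulr_sumr; apply: ler_sum => k _.
  rewrite rmorphM /= oppr0 complexr0.
  have -> : (d k)%:C * s k * ((d k)%:C * cj (s k)) = ((d k) ^+ 2)%:C * (s k * cj (s k)).
    rewrite rmorphXn /=; ring.
  apply: ler_wpM2r; first exact: nn_ge0.
  rewrite lecR !expr2; apply: ler_pM => //; exact: ht.
- rewrite quadE.
  have -> : \sum_i \sum_j cj ((\col_i V t i) i 0) *
      hadamard (hadamard (mxconj A) A) B i j * (\col_i V t i) j 0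
      = \sum_k (d k)%:C * Qf (ccf A) (fun i => cj (V t i) * V k i).
    transitivity (\sum_i \sum_k \sum_j ((d k)%:C *
        (ccf A i j * (cj (V t i) * V k i) * cj (cj (V t j) * V k j)))).
      apply: eq_bigr => i _; rewrite [RHS]exchange_big; apply: eq_bigr => j _.
      rewrite !mxE hB !mulr_sumr mulr_suml; apply: eq_bigr => k _.
      rewrite /ccf rmorphM /= conjcK; ring.
    rewrite exchange_big; apply: eq_bigr => k _; rewrite /Qf mulr_sumr.
    apply: eq_bigr => i _; rewrite mulr_sumr; apply: eq_bigr => j _; ring.
  apply: le_trans (sum_one_le t _); last first.
    move=> k; apply: mulr_ge0; first by rewrite lecR.
    exact: Qf_ge0.
  apply: ler_wpM2l; first by rewrite lecR.
  apply: Hm; split; first by move=> i; rewrite mulrC; exact: nn_ge0.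
  have := O1 t t; rewrite eqxx mulr1n => <-.
  by apply: eq_bigr => i _; rewrite mulrC.
Qed.

End P6.
Section P11.
Variable R : realType.
Local Notation K := (R[i]).
Local Notation cj z := ((z)^*)%C.
Local Open Scope complex_scope.

Lemma sum_prod n (f g : 'I_n -> K) : (\sum_i f i) * (\sum_j g j) = \sum_i \sum_j f i * g j.
Proof. rewrite mulr_suml; apply: eq_bigr => i _; by rewrite mulr_sumr. Qed.

Lemma CS n (a b : 'I_n -> K) :
  (\sum_i a i * cj (b i)) * cj (\sum_i a i * cj (b i)) <=
  (\sum_i a i * cj (a i)) * (\sum_i b i * cj (b i)).
Proof.
set L := _ * _; set Rr := _ * _.
have HL : L = \sum_i \sum_j a i * cj (b i) * (cj (a j) * b j).
  rewrite /L rmorph_sum sum_prod; apply: eq_bigr => i _; apply: eq_bigr => j _.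
  by rewrite rmorphM /= conjcK.
have HL2 : L = \sum_i \sum_j a j * cj (b j) * (cj (a i) * b i).
  by rewrite HL exchange_big.
have HR : Rr = \sum_i \sum_j a i * cj (a i) * (b j * cj (b j)) by rewrite /Rr sum_prod.
have HR2 : Rr = \sum_i \sum_j a j * cj (a j) * (b i * cj (b i)).
  by rewrite HR exchange_big.
have E : (Rr + Rr) - (L + L) = \sum_i \sum_j (a i * b j - a j * b i) * cj (a i * b j - a j * b i).
  rewrite {1}HR {1}HR2 {1}HL {1}HL2 -!big_split -sumrB /=; apply: eq_bigr => i _.
  rewrite -!big_split -sumrB /=; apply: eq_bigr => j _.
  rewrite rmorphB !rmorphM /=; ring.
have : 0 <= (Rr + Rr) - (L + L).
  by rewrite E; apply: sumr_ge0 => i _; apply: sumr_ge0 => j _; exact: nn_ge0.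
rewrite subr_ge0 -!mulr2n => h.
by rewrite -(ler_pMn2r (n:=2)) .
Qed.

End P11.
Section P7.
Variable R : realType.
Local Open Scope classical_set_scope.

Definition fR n (c : 'I_n -> 'I_n -> R) (u : 'rV[R]_n) :=
  \sum_i \sum_j c i j * u 0 i * u 0 j.

Definition simp n : set 'rV[R]_n :=
  [set u | (forall i, 0 <= u 0 i) /\ \sum_i u 0 i = 1].

Lemma fR_cont n (c : 'I_n -> 'I_n -> R) : continuous (fR c).
Proof.
apply: continuous_big => [|i _]; first exact: add_continuous.
apply: continuous_big => [|j _]; first exact: add_continuous.
move=> u; apply: (continuousM (s := fun u : 'rV[R]_n => c i j * u 0 i)
   (t := fun u : 'rV[R]_n => u 0 j)); last exact: coord_continuous.
apply: (continuousM (s := fun _ : 'rV[R]_n => c i j)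
   (t := fun u : 'rV[R]_n => u 0 i)); first exact: cst_continuous.
exact: coord_continuous.
Qed.

Lemma sum_cont n : continuous (fun u : 'rV[R]_n => \sum_i u 0 i).
Proof.
apply: continuous_big => [|i _]; first exact: add_continuous.
exact: coord_continuous.
Qed.

Lemma simp_closed n : closed (@simp n).
Proof.
have -> : @simp n = (\bigcap_(i in setT) [set u : 'rV[R]_n | 0 <= u 0 i]) `&`
    ((fun u : 'rV[R]_n => \sum_i u 0 i) @^-1` [set 1]).
  apply/seteqP; split => u /=.
    by move=> [h1 h2]; split => // i _; exact: h1.
  by move=> [h1 h2]; split => // i; exact: h1.
apply: closedI.
  apply: closed_bigI => i _.
  apply: (@preimage_closed _ _ (fun u : 'rV[R]_n => u 0 i) [set x | 0 <= x]).
    by move=> x _; exact: coord_continuous.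
  exact: closed_ge.
apply: preimage_closed; first by move=> x _; exact: sum_cont.
exact: closed_eq.
Qed.

Lemma simp_compact n : compact (@simp n).
Proof.
apply: (@subclosed_compact _ (@simp n) [set v : 'rV[R]_n | forall i, `[(0:R), 1]%classic (v ord0 i)]).
- exact: simp_closed.
- apply: (@rV_compact R n (fun=> `[(0:R), 1]%classic)) => i.
  exact: segment_compact.
- move=> u [h1 h2] i /=; rewrite in_itv /= h1 /= -h2.
by rewrite (bigD1 i) //= lerDl sumr_ge0.
Qed.

Lemma min_exists n (c : 'I_n -> 'I_n -> R) : (0 < n)%N ->
  exists2 u, simp u & forall v, simp v -> fR c u <= fR c v.
Proof.
move=> n0; pose k0 : 'I_n := Ordinal n0.
have ne : @simp n !=set0.
  exists (\row_i ((i == k0)%:R)); split => [i|]; first by rewrite mxE ler0n.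
  by rewrite (bigD1 k0) //= mxE eqxx big1 ?addr0 // => i /negPf ik; rewrite mxE ik.
have [u uS umin] := EVT_min_rV ne (@simp_compact n) (continuous_subspaceT (@fR_cont n c)).
exists u; first by rewrite inE in uS.
by move=> v vS; apply: umin; rewrite inE.
Qed.

End P7.
Section P8.
Variable R : realType.
Local Open Scope classical_set_scope.

Lemma sum_delta n (j : 'I_n) (a : 'I_n -> R) : \sum_k (k == j)%:R * a k = a j.
Proof.
rewrite (bigD1 j) //= eqxx mul1r big1 ?addr0 // => k /negPf ->; exact: mul0r.
Qed.

Lemma sum4l n (a b c d : 'I_n -> R) (t s : R) :
  \sum_k (a k + t * b k + t * c k + s * d k) =
  \sum_k a k + t * \sum_k b k + t * \sum_k c k + s * \sum_k d k.
Proof. by rewrite !big_split /= -!mulr_sumr. Qed.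

Lemma fR_expand n (c : 'I_n -> 'I_n -> R) (csym : forall i j, c i j = c j i)
   (u w : 'rV[R]_n) (t : R) :
  fR c (u + t *: w) = fR c u + t * (2 * \sum_i w 0 i * \sum_j c i j * u 0 j)
     + t ^+ 2 * fR c w.
Proof.
rewrite /fR.
transitivity (\sum_i \sum_j (c i j * u 0 i * u 0 j + t * (c i j * w 0 i * u 0 j)
   + t * (c i j * w 0 j * u 0 i) + t ^+ 2 * (c i j * w 0 i * w 0 j))).
  by apply: eq_bigr => i _; apply: eq_bigr => j _; rewrite !mxE; ring.
have E : \sum_i \sum_j c i j * w 0 j * u 0 i = \sum_i \sum_j c i j * w 0 i * u 0 j.
  rewrite exchange_big /=; apply: eq_bigr => i _; apply: eq_bigr => j _.
  by rewrite csym.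
rewrite (eq_bigr (fun i => \sum_j c i j * u 0 i * u 0 j + t * \sum_j (c i j * w 0 i * u 0 j)
   + t * \sum_j (c i j * w 0 j * u 0 i) + t ^+ 2 * \sum_j (c i j * w 0 i * w 0 j))); last first.
  by move=> i _; rewrite sum4l.
rewrite sum4l E.
have -> : \sum_i w 0 i * \sum_j c i j * u 0 j = \sum_i \sum_j c i j * w 0 i * u 0 j.
  apply: eq_bigr => i _; rewrite mulr_sumr; apply: eq_bigr => j _; ring.
ring.
Qed.

End P8.
Section P9.
Variable R : realType.
Local Open Scope classical_set_scope.

Lemma kkt_stepA n (c : 'I_n -> 'I_n -> R) (csym : forall i j, c i j = c j i)
   (u : 'rV[R]_n) : simp u -> (forall v, simp v -> fR c u <= fR c v) ->
  forall i j, 0 < u 0 i -> \sum_k c i k * u 0 k <= \sum_k c j k * u 0 k.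
Proof.
move=> [u0 u1] umin i j ui.
set g := fun i => \sum_k c i k * u 0 k.
rewrite leNgt; apply/negP => gji.
have ij : i != j by apply: contraTneq gji => ->; rewrite ltxx.
pose w : 'rV[R]_n := \row_k ((k == j)%:R - (k == i)%:R).
pose K0 := fR c w.
pose del := g i - g j.
have del0 : 0 < del by rewrite subr_gt0.
pose t := Num.min (u 0 i) (del / (`|K0| + 1)).
have K1 : 0 < `|K0| + 1 by rewrite ltr_wpDl.
have t0 : 0 < t by rewrite lt_min ui divr_gt0.
have vS : simp (u + t *: w).
  split.
    move=> k; rewrite !mxE.
    have [->|kj] := eqVneq k j.
      by rewrite eq_sym (negPf ij) subr0 mulr1 addr_ge0 // ltW.
    rewrite mulr0n sub0r.
    have [->|ki] := eqVneq k i.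
      by rewrite mulr1n mulrN1 subr_ge0 ge_min lexx.
    by rewrite mulr0n oppr0 mulr0 addr0.
  under eq_bigr do rewrite !mxE.
  rewrite big_split /= u1 -mulr_sumr sumrB.
  have h1 : forall l : 'I_n, \sum_k (k == l)%:R = 1 :> R.
    by move=> l; rewrite -[RHS](sum_delta l (fun=> 1)); apply: eq_bigr => k _; rewrite mulr1.
  rewrite !h1; lra.
have := umin _ vS; rewrite fR_expand //.
have -> : \sum_i0 w 0 i0 * \sum_j0 c i0 j0 * u 0 j0 = - del.
  rewrite /del /g; under eq_bigr do rewrite mxE mulrBl.
  by rewrite sumrB !sum_delta opprB.
move=> h.
have h2 : t * K0 < del.
  apply: (le_lt_trans (ler_norm _)); rewrite normrM (gtr0_norm t0).
  apply: (le_lt_trans (y := del / (`|K0| + 1) * `|K0|)).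
    by apply: ler_wpM2r => //; rewrite ge_min lexx orbT.
  by rewrite mulrAC ltr_pdivrMr // ltr_pM2l // ltrDl.
have h3 : t * (2 * - del) + t ^+ 2 * K0 < 0.
  rewrite expr2 -mulrA -mulrDr pmulr_rlt0 //; lra.
rewrite /K0 in h3; lra.
Qed.

End P9.
Section P10.
Variable R : realType.
Local Open Scope classical_set_scope.

Lemma kkt n (c : 'I_n -> 'I_n -> R) (csym : forall i j, c i j = c j i)
   (u : 'rV[R]_n) : simp u -> (forall v, simp v -> fR c u <= fR c v) ->
  (forall i, u 0 i * \sum_k c i k * u 0 k = fR c u * u 0 i) /\
  (forall j, fR c u <= \sum_k c j k * u 0 k).
Proof.
move=> uS umin; have SA := kkt_stepA csym uS umin.
case: uS => [u0 u1].
have [i0 ui0] : exists i, 0 < u 0 i.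
  case: (boolP [exists i, 0 < u 0 i]) => [/existsP //|/existsPn h].
  have : \sum_i u 0 i = 0.
    apply: big1 => i _; apply/eqP; rewrite eq_le u0 andbT.
    by rewrite leNgt h.
  by rewrite u1 => /eqP; rewrite oner_eq0.
set g := fun i => \sum_k c i k * u 0 k.
have E i : u 0 i * g i = u 0 i * g i0.
  have [->|ui] := eqVneq (u 0 i) 0; first by rewrite !mul0r.
  have uip : 0 < u 0 i by rewrite lt_neqAle eq_sym ui u0.
  by congr (_ * _); apply/eqP; rewrite eq_le SA // SA.
have F : fR c u = g i0.
  rewrite /fR.
  transitivity (\sum_i u 0 i * g i).
    apply: eq_bigr => i _; rewrite /g mulr_sumr; apply: eq_bigr => j _; ring.
  under eq_bigr do rewrite E.
  by rewrite -mulr_suml u1 mul1r.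
split.
  by move=> i; rewrite E F mulrC.
by move=> j; rewrite F; exact: SA.
Qed.

End P10.
Section P12.
Variable R : realType.
Local Notation K := (R[i]).
Local Notation cj z := ((z)^*)%C.
Local Open Scope complex_scope.
Local Open Scope classical_set_scope.

Lemma sq_le (a b : R) : 0 <= a -> 0 <= b -> a ^+ 2 <= b ^+ 2 -> a <= b.
Proof. move=> a0 b0 h; nra. Qed.

Lemma frob_ge0 m n (M : 'M[K]_(m, n)) : 0 <= frob M.
Proof. exact: sqrtr_ge0. Qed.

Lemma frob2 m n (M : 'M[K]_(m, n)) :
  ((frob M) ^+ 2)%:C = \sum_i \sum_j M i j * cj (M i j).
Proof.
rewrite /frob sqr_sqrtr; last by apply: sumr_ge0 => i _; apply: sumr_ge0 => j _; exact: sqr_ge0.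
rewrite rmorph_sum; apply: eq_bigr => i _; rewrite rmorph_sum; apply: eq_bigr => j _.
exact: cabs2.
Qed.

Definition nx n (x : 'cV[K]_n) := \sum_i x i 0 * cj (x i 0).

Lemma vnorm2 n (x : 'cV[K]_n) : ((vnorm x) ^+ 2)%:C = nx x.
Proof. by rewrite /vnorm frob2; apply: eq_bigr => i _; rewrite big_ord1. Qed.

Lemma vnorm_ge0 n (x : 'cV[K]_n) : 0 <= vnorm x.
Proof. exact: frob_ge0. Qed.

Lemma nx_ge0 n (x : 'cV[K]_n) : 0 <= nx x.
Proof. by apply: sumr_ge0 => i _; exact: nn_ge0. Qed.

Lemma vnorm_le n (x : 'cV[K]_n) (b : R) : 0 <= b -> nx x <= (b ^+ 2)%:C -> vnorm x <= b.
Proof.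
move=> b0 h; apply: sq_le => //; first exact: vnorm_ge0.
by rewrite -lecR vnorm2.
Qed.

Lemma mulmx_col n (M : 'M[K]_n) (x : 'cV[K]_n) i :
  (M *m x) i 0 = \sum_j M i j * x j 0.
Proof. by rewrite mxE. Qed.

Lemma nx_mul_le n (M : 'M[K]_n) (x : 'cV[K]_n) :
  nx (M *m x) <= ((frob M) ^+ 2)%:C * nx x.
Proof.
rewrite frob2 mulr_suml; apply: ler_sum => i _.
rewrite mulmx_col.
have := CS (fun j => M i j) (fun j => cj (x j 0)).
have E : forall j, x j 0 * cj (x j 0) = cj (x j 0) * cj (cj (x j 0)).
  by move=> j; rewrite conjcK mulrC.
under eq_bigr do rewrite conjcK.
by under [X in _ <= _ * X -> _]eq_bigr do rewrite -E.
Qed.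

Lemma specset_ub n (M : 'M[K]_n) :
  ubound [set vnorm (M *m x) | x in [set x : 'cV[K]_n | vnorm x = 1]] (frob M).
Proof.
move=> _ [x /= x1 <-]; apply: vnorm_le; first exact: frob_ge0.
apply: (le_trans (nx_mul_le _ _)).
by rewrite -vnorm2 x1 expr1n mulr1.
Qed.

Lemma spec_lb n (M : 'M[K]_n) (x : 'cV[K]_n) : vnorm x = 1 -> vnorm (M *m x) <= specnorm M.
Proof.
move=> x1; rewrite /specnorm; apply: ub_le_sup.
  by exists (frob M); exact: specset_ub.
by exists x.
Qed.

Lemma spec_ub n (M : 'M[K]_n) (b : R) : 0 <= b ->
  (forall x : 'cV[K]_n, vnorm x = 1 -> vnorm (M *m x) <= b) -> specnorm M <= b.
Proof.
move=> b0 h; rewrite /specnorm.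
set S := [set _ | _ in _].
have [ne|e] := pselect (S !=set0).
  by apply: ge_sup => // _ [x /= x1 <-]; exact: h.
have -> : S = set0.
  by apply/seteqP; split => // y Sy; apply: e; exists y.
by rewrite sup0.
Qed.

Lemma spec_ge0 n (M : 'M[K]_n) : 0 <= specnorm M.
Proof.
rewrite /specnorm; set S := [set _ | _ in _].
have [ne|e] := pselect (S !=set0).
  case: ne => y Sy; apply: (le_trans (y := y)); last first.
    by apply: ub_le_sup => //; exists (frob M); exact: specset_ub.
  by case: Sy => x _ <-; exact: vnorm_ge0.
have -> : S = set0.
  by apply/seteqP; split => // y Sy; apply: e; exists y.
by rewrite sup0.
Qed.

End P12.
Section P13.
Variable R : realType.
Local Notation K := (R[i]).
Local Notation cj z := ((z)^*)%C.
Local Open Scope complex_scope.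
Local Open Scope classical_set_scope.

Variables (n : nat) (A : 'M[K]_n) (u : 'rV[R]_n).
Hypothesis u0 : forall i, 0 <= u 0 i.
Hypothesis u1 : \sum_i u 0 i = 1.

Lemma cjM (a b : K) : cj (a * b) = cj a * cj b.
Proof. exact: rmorphM. Qed.
Lemma cjK (a : K) : cj (cj a) = a.
Proof. exact: conjcK. Qed.
Lemma cjS (F : 'I_n -> K) : cj (\sum_i F i) = \sum_i cj (F i).
Proof. exact: rmorph_sum. Qed.

Lemma realM (a b : R) : (a * b)%:C = a%:C * b%:C :> K.
Proof. exact: rmorphM. Qed.

Lemma realS (F : 'I_n -> R) : (\sum_i F i)%:C = \sum_i (F i)%:C :> K.
Proof. exact: rmorph_sum. Qed.

Lemma realC1 : (1 : R)%:C = 1 :> K.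
Proof. exact: rmorph1. Qed.

Definition Yv i : K := (Num.sqrt (u 0 i))%:C.
Definition B0 : 'M[K]_n := \matrix_(i, j) (Yv i * Yv j).

Lemma Yr i : cj (Yv i) = Yv i.
Proof. exact: conjc_real. Qed.

Lemma YY i : Yv i * Yv i = (u 0 i)%:C.
Proof. by rewrite /Yv -rmorphM /= -expr2 sqr_sqrtr. Qed.

Lemma sumY : \sum_i (u 0 i)%:C = 1 :> K.
Proof. by rewrite -rmorph_sum u1. Qed.

Lemma B0_psd : psd B0.
Proof.
split.
  by move=> i j; rewrite !mxE cjM !Yr mulrC.
move=> x; rewrite quadE.
have -> : \sum_i \sum_j cj (x i 0) * B0 i j * x j 0 =
   cj (\sum_i Yv i * x i 0) * (\sum_i Yv i * x i 0).
  rewrite cjS sum_prod; apply: eq_bigr => i _; apply: eq_bigr => j _.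
  by rewrite mxE cjM Yr; ring.
rewrite mulrC; exact: nn_ge0.
Qed.

Lemma sq_eq (a b : R) : 0 <= a -> 0 <= b -> a ^+ 2 = b ^+ 2 -> a = b.
Proof.
move=> a0 b0 h; apply/le_anti/andP; split; apply: sq_le => //; by rewrite h.
Qed.

Lemma B0E i j : B0 i j * cj (B0 i j) = (u 0 i)%:C * (u 0 j)%:C.
Proof. by rewrite mxE cjM !Yr -!YY; ring. Qed.

Lemma B0_frob : frob B0 = 1.
Proof.
apply: sq_eq => //; first exact: frob_ge0.
apply: complexI; rewrite frob2 expr1n.
under eq_bigr do under eq_bigr do rewrite B0E.
by rewrite -sum_prod sumY mulr1.
Qed.

Definition cR i j := cabs (A i j) ^+ 2.

Lemma cRE i j : (cR i j)%:C = A i j * cj (A i j).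
Proof. exact: cabs2. Qed.

Lemma AB0_frob : frob (hadamard A B0) = Num.sqrt (fR cR u).
Proof.
have h : ((frob (hadamard A B0)) ^+ 2) = fR cR u.
  apply: complexI; rewrite frob2 /fR realS; apply: eq_bigr => i _.
  rewrite realS; apply: eq_bigr => j _.
  rewrite !mxE !cjM !Yr realM realM cRE -!YY; ring.
by rewrite -h sqrtr_sqr ger0_norm //; exact: frob_ge0.
Qed.

Lemma vnorm_eq1 (x : 'cV[K]_n) : nx x = 1 -> vnorm x = 1.
Proof.
move=> h; apply: sq_eq => //; first exact: vnorm_ge0.
by apply: complexI; rewrite vnorm2 h expr1n.
Qed.

Lemma nx_unit (x : 'cV[K]_n) : vnorm x = 1 -> nx x = 1.
Proof. by move=> h; rewrite -vnorm2 h expr1n. Qed.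

Lemma B0x (x : 'cV[K]_n) i : (B0 *m x) i 0 = Yv i * \sum_j Yv j * x j 0.
Proof. by rewrite mxE mulr_sumr; apply: eq_bigr => j _; rewrite mxE mulrA. Qed.

Lemma B0_spec : specnorm B0 = 1.
Proof.
apply/le_anti/andP; split.
  apply: spec_ub => // x x1; apply: vnorm_le => //.
  rewrite expr1n realC1 /nx; under eq_bigr do rewrite B0x.
  set s := \sum_j Yv j * x j 0.
  have -> : \sum_i Yv i * s * cj (Yv i * s) = s * cj s.
    transitivity (\sum_i (u 0 i)%:C * (s * cj s)).
      by apply: eq_bigr => i _; rewrite cjM Yr -YY; ring.
    by rewrite -mulr_suml sumY mul1r.
  have := CS (fun j => x j 0) Yv.
  have -> : \sum_i x i 0 * cj (Yv i) = s by apply: eq_bigr => i _; rewrite Yr mulrC.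
  have -> : \sum_i Yv i * cj (Yv i) = 1 by under eq_bigr do rewrite Yr YY; exact: sumY.
  move=> h; apply: (le_trans h); have := nx_unit x1; rewrite /nx => ->.
  by rewrite mulr1.
pose y : 'cV[K]_n := \col_i Yv i.
have y1 : vnorm y = 1.
  apply: vnorm_eq1; rewrite /nx -sumY; apply: eq_bigr => i _.
  by rewrite mxE Yr YY.
have <- : vnorm (B0 *m y) = 1.
  rewrite -y1; congr vnorm; apply/matrixP => i j; rewrite (ord1 j) B0x.
  have -> : \sum_j Yv j * y j 0 = 1.
    by rewrite -sumY; apply: eq_bigr => k _; rewrite mxE YY.
  by rewrite mulr1 mxE.
exact: spec_lb.
Qed.

Lemma Yz j : u 0 j = 0 -> Yv j = 0.
Proof. by rewrite /Yv => ->; rewrite sqrtr0. Qed.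

Lemma B0_schur (csym : forall i j, cR i j = cR j i)
  (K1 : forall i, u 0 i * \sum_k cR i k * u 0 k = fR cR u * u 0 i)
  (m0 : 0 <= fR cR u) :
  specnorm (hadamard (hadamard (mxconj A) A) B0) <= fR cR u.
Proof.
set m := fR cR u; set M := hadamard _ _.
apply: (spec_ub m0) => x x1; apply: (vnorm_le m0).
pose g i := \sum_k cR i k * u 0 k.
pose al i j : K := (cabs (A i j))%:C.
have alr i j : cj (al i j) = al i j by exact: conjc_real.
have al2 i j : al i j * al i j = (cR i j)%:C by rewrite /cR expr2 realM.
pose x' j := if u 0 j == 0 then 0 else x j 0.
have Mx i : (M *m x) i 0 = \sum_j (al i j * Yv i * x' j) * cj (al i j * Yv j).
  rewrite mxE; apply: eq_bigr => j _; rewrite !mxE cjM alr Yr /x'.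
  have [uj|uj] := eqVneq (u 0 j) 0; first by rewrite (Yz uj) !mulr0 mul0r.
  rewrite [cj (A i j) * A i j]mulrC -cRE -al2; ring.
pose S i := \sum_j (cR i j)%:C * (x' j * cj (x' j)).
have step1 i : (M *m x) i 0 * cj ((M *m x) i 0) <= (m * u 0 i)%:C * S i.
  rewrite Mx; apply: (le_trans (CS _ _)).
  have -> : \sum_j al i j * Yv j * cj (al i j * Yv j) = (g i)%:C.
    rewrite /g realS; apply: eq_bigr => j _; rewrite cjM alr Yr realM -al2 -YY; ring.
  have -> : \sum_j al i j * Yv i * x' j * cj (al i j * Yv i * x' j) = (u 0 i)%:C * S i.
    rewrite /S mulr_sumr; apply: eq_bigr => j _; rewrite !cjM alr Yr -al2 -YY; ring.
  have -> : (m * u 0 i)%:C = (u 0 i)%:C * (g i)%:C by rewrite -realM /g K1 mulrC.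
  rewrite mulrAC; exact: lexx.
have Sj j : (g j)%:C * (x' j * cj (x' j)) = m%:C * (x' j * cj (x' j)).
  rewrite /x'; case: eqP => [uj|/eqP uj]; first by rewrite !mul0r !mulr0.
  congr (_ * _); congr (_%:C); apply: (mulfI uj); by rewrite /g K1 mulrC.
have x'le : \sum_j x' j * cj (x' j) <= 1.
  rewrite -(nx_unit x1); apply: ler_sum => j _; rewrite /x'.
  by case: eqP => _ //; rewrite mul0r; exact: nn_ge0.
apply: (le_trans (ler_sum _ (fun i _ => step1 i))).
have -> : \sum_i (m * u 0 i)%:C * S i = m%:C * \sum_j (g j)%:C * (x' j * cj (x' j)).
  rewrite /S.
  transitivity (\sum_i \sum_j m%:C * ((u 0 i * cR i j)%:C * (x' j * cj (x' j)))).
    apply: eq_bigr => i _; rewrite mulr_sumr; apply: eq_bigr => j _.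
    by rewrite !realM; ring.
  have Gj j : m%:C * ((g j)%:C * (x' j * cj (x' j))) =
      \sum_i m%:C * ((u 0 i * cR i j)%:C * (x' j * cj (x' j))).
    rewrite /g (realS (fun k => cR j k * u 0 k)) big_distrl big_distrr /=.
    by apply: eq_bigr => i _; rewrite csym [u 0 i * _]mulrC.
  rewrite [RHS]big_distrr /=.
  under [RHS]eq_bigr => j _ do rewrite Gj.
  by rewrite [RHS]exchange_big.
under eq_bigr do rewrite Sj.
rewrite -mulr_sumr expr2 realM mulrA.
rewrite -[X in _ <= X]mulr1; apply: ler_wpM2l; last exact: x'le.
by apply: mulr_ge0; rewrite lecR.
Qed.

End P13.
Section P14.
Variable R : realType.
Local Notation K := (R[i]).
Local Notation cj z := ((z)^*)%C.
Local Open Scope complex_scope.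
Local Open Scope classical_set_scope.

Lemma qinner n (M : 'M[K]_n) (x : 'cV[K]_n) :
  (adj x *m M *m x) 0 0 = \sum_i cj (x i 0) * (M *m x) i 0.
Proof. by rewrite -mulmxA mxE; apply: eq_bigr => i _; rewrite /adj /mxconj !mxE. Qed.

Lemma cjR (r : R) : cj (r%:C) = r%:C.
Proof. exact: conjc_real. Qed.

Lemma realM' (a b : R) : (a * b)%:C = a%:C * b%:C :> K.
Proof. exact: rmorphM. Qed.

Lemma realS' n (F : 'I_n -> R) : (\sum_i F i)%:C = \sum_i (F i)%:C :> K.
Proof. exact: rmorph_sum. Qed.

Lemma cRsym n (A : 'M[K]_n) : psd A -> forall i j, cR A i j = cR A j i.
Proof.
move=> [Hh _] i j; apply: complexI; rewrite !cRE Hh conjcK; exact: mulrC.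
Qed.

Lemma main_pos n (A : 'M[K]_n) : psd A -> (0 < n)%N ->
  I2 A = Num.sqrt (Isp (hadamard (mxconj A) A)).
Proof.
move=> pA n0.
have csym := cRsym pA.
have [u uS umin] := min_exists (cR A) n0.
have [K1 K2] := kkt csym uS umin.
case: (uS) => u0 u1.
set m := fR (cR A) u.
have m0 : 0 <= m.
  apply: sumr_ge0 => i _; apply: sumr_ge0 => j _.
  by apply: mulr_ge0; [apply: mulr_ge0; [exact: sqr_ge0|]|].
have Hm : forall a, simplexK a -> m%:C <= Qf (ccf A) a.
  move=> a [a0 a1].
  pose v : 'rV[R]_n := \row_i complex.Re (a i).
  have av i : a i = (v 0 i)%:C by rewrite mxE; apply: real_ge0E.
  have vS : simp v.
    split; first by move=> i; rewrite -lecR -av.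
    by apply: complexI; rewrite realS' realC1 -a1; apply: eq_bigr => i _; rewrite av.
  have -> : Qf (ccf A) a = (fR (cR A) v)%:C.
    rewrite /Qf /fR realS'; apply: eq_bigr => i _; rewrite realS'; apply: eq_bigr => j _.
    by rewrite !av cjR realM' realM' cRE.
  by rewrite lecR; exact: umin.
have m0C : 0 <= m%:C by rewrite lecR.
have I2E : I2 A = Num.sqrt m.
  have lb : forall B, psd B -> frob B = 1 -> Num.sqrt m <= frob (hadamard A B).
    move=> B pB fB; have := F1 pA pB Hm m0C.
    rewrite -frob2 fB expr1n.
    have -> : \sum_i \sum_j ccf A i j * B i j * cj (B i j) = ((frob (hadamard A B)) ^+ 2)%:C.
      rewrite frob2; apply: eq_bigr => i _; apply: eq_bigr => j _.
      by rewrite !mxE cjM /ccf; ring.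
    rewrite -realM' mulr1 lecR => h.
    apply: (le_trans (ler_wsqrtr h)); rewrite sqrtr_sqr ger0_norm //; exact: frob_ge0.
  have inS : [set frob (hadamard A B) | B in [set B : 'M[K]_n | psd B /\ frob B = 1]]
       (Num.sqrt m).
    exists (B0 u); first by split; [exact: B0_psd | exact: B0_frob].
    exact: (AB0_frob A u0).
  rewrite /I2; apply/le_anti/andP; split.
    apply: ge_inf => //; exists 0 => _ [B _ <-]; exact: frob_ge0.
  apply: lb_le_inf; first by exists (Num.sqrt m).
  by move=> _ [B [pB fB] <-]; exact: lb.
have IspE : Isp (hadamard (mxconj A) A) = m.
  have lb : forall B, psd B -> specnorm B = 1 ->
      m <= specnorm (hadamard (hadamard (mxconj A) A) B).
    move=> B pB sB.
    have [x [t [nx1 t0 hy hq]]] := F2 pA pB Hm m0C n0.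
    have t1 : 1 <= t.
      rewrite -sB; apply: (spec_ub t0) => y y1; apply: (vnorm_le t0).
      by apply: (le_trans (hy y)); rewrite -/(nx y) (nx_unit y1) mulr1.
    set M := hadamard _ _ in hq *.
    have x1 : vnorm x = 1 by apply: vnorm_eq1.
    apply: le_trans (spec_lb M x1).
    set q := (adj x *m M *m x) 0 0 in hq.
    have q0 : 0 <= q.
      by apply: le_trans hq; apply: mulr_ge0; rewrite lecR.
    have qE := real_ge0E q0.
    set r := complex.Re q in qE.
    have tmr : t * m <= r by rewrite -lecR realM' -qE.
    have mr : m <= r.
      apply: le_trans tmr; rewrite -[X in X <= _]mul1r; exact: ler_wpM2r.
    apply: le_trans mr _; apply: sq_le.
    - apply: le_trans tmr; exact: mulr_ge0.
    - exact: vnorm_ge0.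
    rewrite -lecR vnorm2.
    have := CS (fun i => (M *m x) i 0) (fun i => x i 0).
    rewrite -/(nx (M *m x)) -/(nx x) (nx_unit x1) mulr1.
    have -> : \sum_i (M *m x) i 0 * cj (x i 0) = q.
      by rewrite /q qinner; apply: eq_bigr => i _; rewrite mulrC.
    by rewrite qE cjR -realM' -expr2.
  have inS : [set specnorm (hadamard (hadamard (mxconj A) A) B) |
       B in [set B : 'M[K]_n | psd B /\ specnorm B = 1]] m.
    exists (B0 u); first by split; [exact: B0_psd | exact: B0_spec].
    apply/le_anti/andP; split; first exact: B0_schur.
    by apply: lb; [exact: B0_psd | exact: B0_spec].
  rewrite /Isp; apply/le_anti/andP; split.
    apply: ge_inf => //; exists 0 => _ [B _ <-]; exact: spec_ge0.
  apply: lb_le_inf; first by exists m.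
  by move=> _ [B [pB fB] <-]; exact: lb.
by rewrite I2E IspE.
Qed.

End P14.
Lemma frob_nil (R : realType) k (M : 'M[R[i]]_(0, k)) : frob M = 0.
Proof. by rewrite /frob big_ord0 sqrtr0. Qed.

Lemma specnorm_nil (R : realType) (M : 'M[R[i]]_0) : specnorm M = 0.
Proof.
rewrite /specnorm.
have -> : [set vnorm (M *m x) | x in [set x : 'cV[R[i]]_0 | vnorm x = 1]]%classic = set0.
  apply/seteqP; split => // y [x /= x1 _]; move: x1; rewrite /vnorm frob_nil.
  by move=> /eqP; rewrite eq_sym oner_eq0.
exact: sup0.
Qed.

Theorem theorem3p3 (R : realType) (n : nat) (A : 'M[R[i]]_n) :
  psd A -> I2 A = Num.sqrt (Isp (hadamard (mxconj A) A)).
Proof.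
move=> pA; case: n A pA => [|n] A pA; last exact: main_pos.
rewrite /I2 /Isp.
have -> : [set frob (hadamard A B) | B in [set B | psd B /\ frob B = 1]]%classic = set0.
  apply/seteqP; split => // y [B [_ fB] _]; move: fB; rewrite frob_nil.
  by move=> /eqP; rewrite eq_sym oner_eq0.
have -> : [set specnorm (hadamard (hadamard (mxconj A) A) B) |
    B in [set B | psd B /\ specnorm B = 1]]%classic = set0.
  apply/seteqP; split => // y [B [_ fB] _]; move: fB; rewrite specnorm_nil.
  by move=> /eqP; rewrite eq_sym oner_eq0.
by rewrite !inf0 sqrtr0.
Qed.
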